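(* The set $\mathcal{I}_{\mathrm{str}}(\Lambda \cap T_1)$ has the cardinality of the continuum.
   Context: Let $\mathbf{2}=\{0,1\}$. A partial function of arity $n$ on $\mathbf{2}$ is a map $f:\operatorname{dom} f\to\mathbf{2}$ with $\operatorname{dom} f\subseteq \mathbf{2}^n$; it is total if $\operatorname{dom} f=\mathbf{2}^n$. $P_{\mathbf{2}}$ is the set of all partial functions, $O_{\mathbf{2}}$ the set of total ones. Composition $F=f(g_1,\dots,g_n)$ is given by $F(\mathbf{x})=f(g_1(\mathbf{x}),\dots,g_n(\mathbf{x}))$ on $\operatorname{dom} F=\{\mathbf{x}\in\bigcap_i\operatorname{dom} g_i : (g_1(\mathbf{x}),\dots,g_n(\mathbf{x}))\in\operatorname{dom} f\}$. A partial clone is a composition-closed subset of $P_{\mathbf{2}}$ containing all projections; a total clone is one contained in $O_{\mathbf{2}}$. A partial clone $X$ is strong if it contains every restriction of each of its members. For a total clone $C$, $\mathcal{I}_{\mathrm{str}}(C)$ is the set of all strong partial clones $X$ with $X\cap O_{\mathbf{2}}=C$. $\Lambda$ is the total clone generated by $\land$ and the constants $c_0,c_1$; $T_1$ is the clone of total Boolean functions $f$ with $f(1,\dots,1)=1$. *)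

(* Defs.v *)
From mathcomp Require Import all_boot.
Set Implicit Arguments. Unset Strict Implicit. Unset Printing Implicit Defensive.

Definition btuple (n : nat) := {ffun 'I_n -> bool}.

(* A partial function on 2 = {0,1} of arity (pred_ar f).+1 :
   f x = None means x is not in dom f. *)
Record pfun := PFun {
  pred_ar : nat;
  pfn : {ffun btuple pred_ar.+1 -> option bool} }.

Definition arity (f : pfun) : nat := (pred_ar f).+1.

Definition total (f : pfun) : Prop := forall x, pfn f x <> None.

Definition comp (f : pfun) (m : nat)
  (gs : 'I_(arity f) -> {ffun btuple m.+1 -> option bool}) :
  {ffun btuple m.+1 -> option bool} :=
  [ffun x => if [forall i, gs i x != None]
             then pfn f [ffun i => odflt false (gs i x)]
             else None].

Definition proj (n : nat) (i : 'I_n.+1) : pfun :=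
  PFun [ffun x : btuple n.+1 => Some (x i)].

Definition partial_clone (X : pfun -> Prop) : Prop :=
  (forall (n : nat) (i : 'I_n.+1), X (proj i)) /\
  (forall (f : pfun) (m : nat) (gs : 'I_(arity f) -> {ffun btuple m.+1 -> option bool}),
      X f -> (forall i, X (PFun (gs i))) -> X (PFun (comp gs))).

Definition restriction_of (n : nat) (g f : {ffun btuple n.+1 -> option bool}) : Prop :=
  forall x, g x = None \/ g x = f x.

Definition strong_partial_clone (X : pfun -> Prop) : Prop :=
  partial_clone X /\
  (forall (n : nat) (f g : {ffun btuple n.+1 -> option bool}),
      X (PFun f) -> restriction_of g f -> X (PFun g)).

Definition generated (S : pfun -> Prop) (f : pfun) : Prop :=
  forall Y, partial_clone Y -> (forall g, S g -> Y g) -> Y f.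

Definition f_and : pfun :=
  PFun [ffun x : btuple 2 => Some (x ord0 && x (lift ord0 ord0))].
Definition f_const (b : bool) : pfun := PFun [ffun _ : btuple 1 => Some b].

Definition Lambda_gens (g : pfun) : Prop :=
  g = f_and \/ g = f_const false \/ g = f_const true.

Definition Lambda (f : pfun) : Prop := generated Lambda_gens f.

Definition T1 (f : pfun) : Prop :=
  total f /\ pfn f [ffun _ => true] = Some true.

(* I_str(C): strong partial clones X with X ∩ O_2 = C *)
Definition Istr (C : pfun -> Prop) (X : pfun -> Prop) : Prop :=
  strong_partial_clone X /\ (forall f, (X f /\ total f) <-> C f).

(* Main.v *)
Require Import Defs.
From mathcomp Require Import all_boot.
From mathcomp Require Import zify.
From Stdlib Require Import Classical ClassicalEpsilon ProofIrrelevance FunctionalExtensionality PropExtensionality Eqdep_dec.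
Set Implicit Arguments. Unset Strict Implicit. Unset Printing Implicit Defensive.

Definition pres (f : pfun) (m : nat) (R : pred (btuple m)) : Prop :=
  forall F : 'I_m -> btuple (arity f),
    (forall c : 'I_(arity f), R [ffun i => F i c]) ->
    (forall i, pfn f (F i) <> None) ->
    R [ffun i => odflt false (pfn f (F i))].

Lemma pres_proj m (R : pred (btuple m)) n (i : 'I_n.+1) : pres (proj i) R.
Proof.
move=> F HF _.
have -> : [ffun r => odflt false (pfn (proj i) (F r))] = [ffun r => F r i].
  by apply/ffunP=> r; rewrite !ffunE.
exact: HF.
Qed.

Lemma pres_comp m (R : pred (btuple m)) (f : pfun) k
  (gs : 'I_(arity f) -> {ffun btuple k.+1 -> option bool}) :
  pres f R -> (forall i, pres (PFun (gs i)) R) -> pres (PFun (Defs.comp gs)) R.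
Proof.
move=> Hf Hg F HF Hd.
have Hall : forall r, [forall i, gs i (F r) != None].
  by move=> r; move: (Hd r); rewrite /= /comp ffunE; case: ifP.
pose F' := fun r => [ffun i => odflt false (gs i (F r))] : btuple (arity f).
have HF' : forall c, R [ffun r => F' r c].
  move=> c.
  have Hdc : forall r, pfn (PFun (gs c)) (F r) <> None.
    by move=> r /=; move/forallP: (Hall r) => /(_ c) /eqP.
  have := Hg c F HF Hdc.
  congr R; by apply/ffunP=> r; rewrite !ffunE.
have Hd' : forall r, pfn f (F' r) <> None.
  by move=> r; move: (Hd r); rewrite /= /comp ffunE (Hall r).
have := Hf F' HF' Hd'.
by congr R; apply/ffunP=> r; rewrite !ffunE /= (Hall r).
Qed.

Lemma pres_restr m (R : pred (btuple m)) n (f g : {ffun btuple n.+1 -> option bool}) :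
  pres (PFun f) R -> restriction_of g f -> pres (PFun g) R.
Proof.
move=> Hf Hr F HF Hd.
have E : forall r, g (F r) = f (F r).
  by move=> r; case: (Hr (F r)) => // /(Hd r).
have Hd' : forall r, pfn (PFun f) (F r) <> None by move=> r /=; rewrite -E; exact: Hd.
have := Hf F HF Hd'.
by congr R; apply/ffunP=> r; rewrite !ffunE /= E.
Qed.

Section Rho.
Variable n : nat.
Definition vu : 'I_n.+3 := inord n.
Definition vt : 'I_n.+3 := inord n.+1.
Definition vw : 'I_n.+3 := inord n.+2.
Definition ispt (i : 'I_n.+3) : bool := i < n.

Lemma val_vu : nat_of_ord vu = n. Proof. by rewrite /vu inordK //; lia. Qed.
Lemma val_vt : nat_of_ord vt = n.+1. Proof. by rewrite /vt inordK //; lia. Qed.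
Lemma val_vw : nat_of_ord vw = n.+2. Proof. by rewrite /vw inordK //; lia. Qed.
Lemma val_inord k : k < n.+3 -> nat_of_ord (inord k : 'I_n.+3) = k.
Proof. by move=> h; rewrite inordK. Qed.

Lemma caseV (i : 'I_n.+3) : [\/ ispt i, i = vu, i = vt | i = vw].
Proof.
have := ltn_ord i; rewrite /ispt.
case: (ltnP i n) => h1 h2; first by constructor 1.
case: (eqVneq (nat_of_ord i) n) => e1; first by constructor 2; apply: val_inj; rewrite /= val_vu.
case: (eqVneq (nat_of_ord i) n.+1) => e2; first by constructor 3; apply: val_inj; rewrite /= val_vt.
constructor 4; apply: val_inj; rewrite /= val_vw; lia.
Qed.

Definition rho (x : btuple n.+3) : bool :=
  [&& [forall i, (ispt i && x i) ==> x vu],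
      [forall i, [forall j, [&& ispt i, ispt j, i != j, x i & x j] ==> x vt]],
      [forall i, ispt i ==> x i] ==> x vw &
      x vw ==> x vt].

Lemma rhoE x : rho x ->
  [/\ forall i, ispt i -> x i -> x vu,
      forall i j, ispt i -> ispt j -> i != j -> x i -> x j -> x vt,
      (forall i, ispt i -> x i) -> x vw & x vw -> x vt].
Proof.
case/and4P => /forallP H1 /forallP H2 /implyP H3 /implyP H4; split => //.
- by move=> i pi xi; apply: (implyP (H1 i)); rewrite pi xi.
- by move=> i j pi pj ij xi xj; move/forallP: (H2 i) => /(_ j) /implyP; apply; rewrite pi pj ij xi xj.
- by move=> H; apply: H3; apply/forallP=> i; apply/implyP; exact: H.
Qed.

Lemma rhoI (x : btuple n.+3) :
  (forall i, ispt i -> x i -> x vu) ->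
  (forall i j, ispt i -> ispt j -> i != j -> x i -> x j -> x vt) ->
  ((forall i, ispt i -> x i) -> x vw) -> (x vw -> x vt) -> rho x.
Proof.
move=> H1 H2 H3 H4; apply/and4P; split.
- by apply/forallP=> i; apply/implyP=> /andP[]; exact: H1.
- apply/forallP=> i; apply/forallP=> j; apply/implyP=> /and5P[]; exact: H2.
- by apply/implyP=> /forallP H; apply: H3 => i; apply/implyP.
- by apply/implyP.
Qed.

Hypothesis n3 : 2 < n.

Lemma inord_pt k : k < 3 -> ispt (inord k) /\ nat_of_ord (inord k : 'I_n.+3) = k.
Proof. move=> hk; have hk2 : k < n.+3 by lia. by rewrite /ispt !inordK //; split => //; lia. Qed.

Ltac vsolve :=
  rewrite /ispt ?ffunE -?val_eqE /= ?val_vu ?val_vt ?val_vw; lia.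

Lemma rule3_helper (x : btuple n.+3) : (forall i, ispt i -> x i) ->
  [/\ x (inord 0), x (inord 1) & x (inord 2)].
Proof.
move=> H; split; apply: H; [ exact: (proj1 (inord_pt (isT : 0 < 3))) | exact: (proj1 (inord_pt (isT : 1 < 3))) | exact: (proj1 (inord_pt (isT : 2 < 3)))].
Qed.


Definition q0 : 'I_n.+3 := inord 0.
Definition q1 : 'I_n.+3 := inord 1.
Definition q2 : 'I_n.+3 := inord 2.
Lemma val_q0 : nat_of_ord q0 = 0. Proof. exact: (inord_pt (isT : 0 < 3)).2. Qed.
Lemma val_q1 : nat_of_ord q1 = 1. Proof. exact: (inord_pt (isT : 1 < 3)).2. Qed.
Lemma val_q2 : nat_of_ord q2 = 2. Proof. exact: (inord_pt (isT : 2 < 3)).2. Qed.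

Ltac vs :=
  rewrite /ispt ?ffunE -?val_eqE /= ?val_vu ?val_vt ?val_vw ?val_q0 ?val_q1 ?val_q2 ; lia.

Lemma r3 (x : btuple n.+3) : (forall i, ispt i -> x i) -> [/\ x q0, x q1 & x q2].
Proof. exact: rule3_helper. Qed.

Definition Cpu (p : 'I_n.+3) : btuple n.+3 := [ffun i => (i == p) || (i == vu)].
Definition C2 (p q : 'I_n.+3) : btuple n.+3 := [ffun i => [|| i == p, i == q, i == vu | i == vt]].
Definition Cnopw (p : 'I_n.+3) : btuple n.+3 := [ffun i => (i != p) && (i != vw)].
Definition Cwt : btuple n.+3 := [ffun i => (i == vw) || (i == vt)].
Definition Ct : btuple n.+3 := [ffun i => i == vt].
Definition Cone : btuple n.+3 := [ffun _ => true].
Definition Cemp : btuple n.+3 := [ffun _ => false].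

Ltac closed := apply: rhoI => [i|i j| |]; [ | | move/r3; case | ]; vs.

Lemma Cpu_rho p : ispt p -> rho (Cpu p). Proof. rewrite /ispt => hp; closed. Qed.
Lemma C2_rho p q : ispt p -> ispt q -> rho (C2 p q). Proof. rewrite /ispt => hp hq; closed. Qed.
Lemma Cnopw_rho p : ispt p -> rho (Cnopw p).
Proof.
move=> hp0; have hp := hp0; rewrite /ispt in hp.
apply: rhoI => [i|i j|H|]; [vs|vs| |vs].
by have := H p hp0; rewrite ffunE eqxx.
Qed.
Lemma Cwt_rho : rho Cwt. Proof. closed. Qed.
Lemma Ct_rho : rho Ct. Proof. closed. Qed.
Lemma Cone_rho : rho Cone. Proof. closed. Qed.
Lemma Cemp_rho : rho Cemp. Proof. closed. Qed.

End Rho.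

Ltac vg n3 := rewrite /ispt ?ffunE -?val_eqE /= ?val_vu ?val_vt ?val_vw
   ?(val_q0 n3) ?(val_q1 n3) ?(val_q2 n3); lia.

Lemma pre n m (s : 'I_m.+3 -> 'I_n.+3) (C : btuple n.+3) :
  rho [ffun r => C (s r)] ->
  [/\ forall a, ispt a -> C (s a) -> C (s (vu m)),
      forall a b, ispt a -> ispt b -> a != b -> C (s a) -> C (s b) -> C (s (vt m)),
      (forall a, ispt a -> C (s a)) -> C (s (vw m)) &
      C (s (vw m)) -> C (s (vt m))].
Proof.
case/rhoE => H1 H2 H3 H4; split.
- by move=> a ha ca; have := H1 a ha; rewrite !ffunE; apply.
- by move=> a b ha hb ab ca cb; have := H2 a b ha hb ab; rewrite !ffunE; apply.
- by move=> H; have := H3; rewrite !ffunE; apply => i hi; rewrite ffunE; apply: H.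
- by rewrite !ffunE in H4.
Qed.

Lemma C2_mem n (p q i : 'I_n.+3) : (i == p) || (i == q) || (i == vu n) || (i == vt n) -> C2 p q i.
Proof. by rewrite ffunE => /orP[/orP[/orP[]|]|] ->; rewrite ?orbT. Qed.

Lemma sep2 n (n3 : 2 < n) (i j : 'I_n.+3) : i != vw n -> j != vw n ->
  exists2 C, rho C & [&& C i, C j & ~~ C (vw n)].
Proof.
move=> hi hj.
have h0 := proj1 (inord_pt n3 (isT : 0 < 3)).
set p := (if ispt i then i else q0 n); set q := (if ispt j then j else q0 n).
have pp : ispt p by rewrite /p; case: ifP.
have pq : ispt q by rewrite /q; case: ifP.
exists (C2 p q); first exact: C2_rho.
apply/and3P; split.
- apply: C2_mem; case: (caseV i) hi => [pi|->|->|->] hi.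
  + by rewrite /p pi eqxx.
  + by rewrite eqxx !orbT.
  + by rewrite eqxx !orbT.
  + by rewrite eqxx in hi.
- apply: C2_mem; case: (caseV j) hj => [pj|->|->|->] hj.
  + by rewrite /q pj eqxx !orbT.
  + by rewrite eqxx !orbT.
  + by rewrite eqxx !orbT.
  + by rewrite eqxx in hj.
- move: pp pq; vg n3.
Qed.

Lemma card_pts n : #|[set a : 'I_n.+3 | ispt a]| = n.
Proof.
have -> : [set a : 'I_n.+3 | ispt a] = [set widen_ord (leq_addl 3 n) j | j in 'I_n].
  apply/setP=> a; rewrite inE; apply/idP/imsetP => [ha|[j _ ->]].
    by exists (Ordinal ha) => //; apply: val_inj.
  by rewrite /ispt /=.
by rewrite card_imset ?card_ord // => x y /(congr1 val) /= e; apply: val_inj.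
Qed.

Lemma key n m (s : 'I_m.+3 -> 'I_n.+3) : 2 < n -> 2 < m -> n != m ->
  (forall C, rho C -> rho [ffun r => C (s r)]) ->
  rho [ffun r => s r != vw n].
Proof.
move=> n3 m3 nm H.
have P := fun C (hC : rho C) => pre (H C hC).
have Cw : forall C : btuple n.+3, ~~ C (vw n) -> forall x, C x -> x != vw n.
  by move=> C hC x cx; apply/eqP => e; rewrite -e cx in hC.
apply: rhoI.
- move=> a ha; rewrite !ffunE => hna.
  have [C hC /and3P[c1 _ c3]] := sep2 n3 hna hna.
  case: (P C hC) => R1 _ _ _; exact: (Cw C c3 _ (R1 a ha c1)).
- move=> a b ha hb ab; rewrite !ffunE => hna hnb.
  have [C hC /and3P[c1 c2 c3]] := sep2 n3 hna hnb.
  case: (P C hC) => _ R2 _ _; exact: (Cw C c3 _ (R2 a b ha hb ab c1 c2)).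
- move=> Hall; rewrite ffunE; apply/eqP => ew.
  have Hall' : forall a, ispt a -> s a != vw n by move=> a /Hall; rewrite ffunE.
  have A : forall p, ispt p -> exists2 a, ispt a & s a = p.
    move=> p hp.
    case: (boolP [exists a, ispt a && (s a == p)]) => [/existsP[a /andP[ha /eqP e]]|/existsPn hn].
      by exists a.
    exfalso; case: (P _ (Cnopw_rho n3 hp)) => _ _ R3 _.
    suff : Cnopw p (s (vw m)) by rewrite ew ffunE eqxx andbF.
    apply: R3 => a ha.
    rewrite ffunE Hall' // andbT; move: (hn a); rewrite ha /=; exact: id.
  have [h0 v0] := inord_pt n3 (isT : 0 < 3).
  have [h1 v1] := inord_pt n3 (isT : 1 < 3).
  have [a0 ha0 e0] := A _ h0.
  have [a1 ha1 e1] := A _ h1.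
  set p0 := (inord 0 : 'I_n.+3) in h0 v0 e0.
  set p1 := (inord 1 : 'I_n.+3) in h1 v1 e1.
  have a01 : a0 != a1.
    by apply/eqP => e; move: e1; rewrite -e e0 => /(congr1 val) /=; rewrite v0 v1.
  have B : s (vu m) = vu n.
    case: (P _ (Cpu_rho n3 h0)) => R1 _ _ _.
    case: (P _ (Cpu_rho n3 h1)) => R1' _ _ _.
    have := R1 a0 ha0; rewrite e0 ffunE eqxx => /(_ isT).
    have := R1' a1 ha1; rewrite e1 ffunE eqxx => /(_ isT).
    rewrite ffunE.
    case: (caseV (s (vu m))) => [pt|->|->|->] //; try move: pt; move: v0 v1; vg n3.
  have Ct' : s (vt m) = vt n.
    case: (P _ (Cwt_rho n3)) => _ _ _ R4.
    case: (P _ (C2_rho n3 h0 h1)) => _ R2 _ _.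
    have := R2 a0 a1 ha0 ha1 a01; rewrite e0 e1 !ffunE !eqxx ?orbT => /(_ isT isT).
    have := R4; rewrite ew !ffunE eqxx => /(_ isT).
    case: (caseV (s (vt m))) => [pt|->|->|->] //; try move: pt; move: v0 v1; vg n3.
  have D : forall a, ispt a -> ispt (s a).
    move=> a ha; case: (caseV (s a)) => [//|e|e|e]; exfalso.
    + case: (P _ (Cpu_rho n3 h0)) => _ R2 _ _.
      have aa0 : a != a0 by apply/eqP => ee; move: e; rewrite ee e0 => /(congr1 val) /=; rewrite val_vu v0; lia.
      have := R2 a a0 ha ha0 aa0; rewrite e e0 Ct' !ffunE !eqxx ?orbT => /(_ isT isT).
      move: v0; vg n3.
    + case: (P _ (Ct_rho n3)) => R1 _ _ _.
      have := R1 a ha; rewrite e B !ffunE eqxx => /(_ isT); vg n3.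
    + case: (P _ (Cwt_rho n3)) => R1 _ _ _.
      have := R1 a ha; rewrite e B !ffunE eqxx => /(_ isT); vg n3.
  have E : {in [set a | ispt a] &, injective s}.
    move=> a b; rewrite !inE => ha hb e; apply/eqP; apply/negP => /negP ab.
    case: (P _ (Cpu_rho n3 (D a ha))) => _ R2 _ _.
    have := R2 a b ha hb ab; rewrite -e Ct' !ffunE !eqxx => /(_ isT isT).
    move: (D a ha); vg n3.
  have Im : [set s a | a in [set a | ispt a]] = [set p | ispt p].
    apply/setP => p; rewrite inE; apply/imsetP/idP => [[a]|hp].
      by rewrite inE => ha ->; exact: D.
    by have [a ha <-] := A p hp; exists a; rewrite ?inE.
  have := card_in_imset E; rewrite Im !card_pts => e.
  by rewrite e eqxx in nm.
- rewrite !ffunE => hnw.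
  have [C hC /and3P[c1 _ c3]] := sep2 n3 hnw hnw.
  case: (P C hC) => _ _ _ R4; exact: (Cw C c3 _ (R4 c1)).
Qed.

Definition Rle : pred (btuple 2) := fun x => x ord0 ==> x ord_max.
Definition R3r : pred (btuple 3) := fun x => (x ord0 && x (lift ord0 ord0)) ==> x ord_max.
Definition R1r : pred (btuple 1) := fun x => x ord0.

Section H.
Variable n : nat.
Hypothesis n3 : 2 < n.

Definition NN := #|{ffun 'I_n.+3 -> bool}|.
Definition col (c : 'I_NN.+1) : btuple n.+3 :=
  let x := nth (Cone n) (enum {ffun 'I_n.+3 -> bool}) c in if rho x then x else Cone n.
Lemma col_rho c : rho (col c).
Proof. rewrite /col; case: ifP => // _; exact: Cone_rho. Qed.
Definition cidx (x : btuple n.+3) : 'I_NN.+1 := inord (index x (enum {ffun 'I_n.+3 -> bool})).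
Lemma col_cidx x : rho x -> col (cidx x) = x.
Proof.
move=> hx; rewrite /col /cidx inordK.
  by rewrite nth_index ?mem_enum // hx.
by rewrite ltnS /NN cardE ltnW // index_mem mem_enum.
Qed.
Definition row (i : 'I_n.+3) : btuple NN.+1 := [ffun c => col c i].
Definition hval (x : btuple NN.+1) : bool := ~~ (x (cidx (Cwt n)) && ~~ x (cidx (Ct n))).
Definition hf : {ffun btuple NN.+1 -> option bool} :=
  [ffun x => if [exists i, x == row i] then Some (hval x) else None].
Definition h : pfun := PFun hf.

Lemma hval_row i : hval (row i) = (i != vw n).
Proof.
rewrite /hval !ffunE !col_cidx ?Cwt_rho ?Ct_rho // !ffunE.
rewrite -!val_eqE /= val_vw val_vt; lia.
Qed.

Lemma h_pres mm (R : pred (btuple mm)) :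
  (forall s : 'I_mm -> 'I_n.+3, (forall C, rho C -> R [ffun r => C (s r)]) ->
     R [ffun r => s r != vw n]) -> pres h R.
Proof.
move=> Hs F HF Hd.
have : forall r, exists i, F r = row i.
  move=> r; move: (Hd r); rewrite /= ffunE.
  by case: existsP => [[i /eqP e] _|//]; exists i.
case/fin_all_exists => s Hsr.
have := Hs s.
have H1 : forall C, rho C -> R [ffun r => C (s r)].
  move=> C hC; rewrite -(col_cidx hC); have := HF (cidx C).
  by congr R; apply/ffunP => r; rewrite !ffunE Hsr ffunE.
move/(_ H1); congr R; apply/ffunP => r; rewrite !ffunE Hsr.
have -> : [exists i, row (s r) == row i] by apply/existsP; exists (s r).
by rewrite /= hval_row.
Qed.

Lemma h_viol : ~ pres h (@rho n).
Proof.
move=> Hp.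
have := Hp row.
have H1 : forall c, rho [ffun i => row i c].
  move=> c; have -> : [ffun i => row i c] = col c by apply/ffunP => i; rewrite !ffunE.
  exact: col_rho.
have H2 : forall i, pfn h (row i) <> None.
  move=> i; rewrite /= ffunE.
  by have -> : [exists j, row i == row j] by apply/existsP; exists i.
move/(_ H1 H2)/rhoE => [_ _ R3 _].
have Ew : forall i, [ffun i => odflt false (pfn h (row i))] i = (i != vw n).
  move=> i; rewrite !ffunE.
  have -> : [exists j, row i == row j] by apply/existsP; exists i.
  by rewrite /= hval_row.
suff : [ffun i => odflt false (pfn h (row i))] (vw n) by rewrite Ew eqxx.
apply: R3 => i hi; rewrite Ew; move: hi; rewrite /ispt -val_eqE /= val_vw; lia.
Qed.

Lemma h_Rle : pres h Rle.
Proof.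
apply: h_pres => s Hs; rewrite /Rle !ffunE; apply/implyP => h0.
case: (eqVneq (s ord_max) (vw n)) => // e.
have [C hC /and3P[c1 _ c3]] := sep2 n3 h0 h0.
by have := Hs C hC; rewrite /Rle !ffunE c1 e (negbTE c3).
Qed.

Lemma h_R3 : pres h R3r.
Proof.
apply: h_pres => s Hs; rewrite /R3r !ffunE; apply/implyP => /andP[h0 h1].
case: (eqVneq (s ord_max) (vw n)) => // e.
have [C hC /and3P[c1 c2 c3]] := sep2 n3 h0 h1.
by have := Hs C hC; rewrite /R3r !ffunE c1 c2 e (negbTE c3).
Qed.

Lemma h_R1 : pres h R1r.
Proof.
apply: h_pres => s Hs.
by have := Hs _ (Cemp_rho n3); rewrite /R1r !ffunE.
Qed.

End H.

Definition XS (S : nat -> bool) (f : pfun) : Prop :=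
  [/\ pres f Rle, pres f R3r, pres f R1r & forall k, S k -> pres f (@rho k.+3)].

Lemma X_strong S : strong_partial_clone (XS S).
Proof.
split; first split.
- by move=> n i; split => [|||k _]; exact: pres_proj.
- move=> f m gs [h1 h2 h3 h4] Hg; split.
  + by apply: pres_comp h1 _ => i; case: (Hg i).
  + by apply: pres_comp h2 _ => i; case: (Hg i).
  + by apply: pres_comp h3 _ => i; case: (Hg i).
  + by move=> k Sk; apply: pres_comp (h4 k Sk) _ => i; case: (Hg i) => _ _ _; apply.
- move=> n f g [h1 h2 h3 h4] Hr; split.
  + exact: pres_restr Hr.
  + exact: pres_restr Hr.
  + exact: pres_restr Hr.
  + by move=> k Sk; exact: pres_restr (h4 k Sk) Hr.
Qed.

Lemma h_in k S : S k = false -> XS S (h k.+3).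
Proof.
move=> Sk; have k3 : 2 < k.+3 by [].
split; [exact: (h_Rle k3) | exact: (h_R3 k3) | exact: (h_R1 k3) |].
move=> j Sj; apply: (h_pres k3) => s Hs; apply: key => //.
apply/eqP => e; have ejk : j = k by lia. by move: Sj; rewrite ejk Sk.
Qed.

Lemma h_notin k (S : nat -> bool) : S k -> ~ XS S (h k.+3).
Proof. by move=> Sk [_ _ _ /(_ k Sk)]; apply: h_viol. Qed.

Lemma X_inj S T : XS S = XS T -> S = T.
Proof.
move=> E; apply: functional_extensionality_dep => k.
case SS: (S k); case TT: (T k) => //.
- by have := h_in TT; rewrite -E => /(h_notin SS).
- by have := h_in SS; rewrite E => /(h_notin TT).
Qed.

Definition conjf n (b : bool) (s : seq 'I_n.+1) : {ffun btuple n.+1 -> option bool} :=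
  [ffun x : btuple n.+1 => Some (b && \big[andb/true]_(i <- s) x i)].
Definition Yc (f : pfun) : Prop := exists b s, pfn f = conjf b s.

Lemma Yc_clone : partial_clone Yc.
Proof.
split.
- move=> n i; exists true, [:: i]; apply/ffunP => x.
  by rewrite !ffunE big_cons big_nil andbT.
- move=> f m gs [b [s Hf]] Hg.
  have : forall i, exists u : bool * seq 'I_m.+1, gs i = conjf u.1 u.2.
    by move=> i; case: (Hg i) => b' [s' e]; exists (b', s').
  case/fin_all_exists => u Hu.
  exists (b && \big[andb/true]_(i <- s) (u i).1), (flatten [seq (u i).2 | i <- s]).
  apply/ffunP => x; rewrite /= /Defs.comp !ffunE.
  have -> : [forall i, gs i x != None] by apply/forallP => i; rewrite Hu ffunE.
  rewrite Hf ffunE; congr Some.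
  rewrite -andbA; congr andb.
  rewrite big_flatten big_map -big_split /=; apply: eq_bigr => i _.
  by rewrite ffunE Hu ffunE.
Qed.

Lemma Yc_gens g : Lambda_gens g -> Yc g.
Proof.
case=> [->|[->|->]].
- exists true, [:: ord0; lift ord0 ord0]; apply/ffunP => x.
  by rewrite !ffunE !big_cons big_nil andbT.
- by exists false, [::]; apply/ffunP => x; rewrite !ffunE /= ?big_nil ?andbT.
- by exists true, [::]; apply/ffunP => x; rewrite !ffunE /= ?big_nil ?andbT.
Qed.

Lemma Lambda_Yc f : Lambda f -> Yc f.
Proof. by move=> H; apply: H; [exact: Yc_clone | exact: Yc_gens]. Qed.

Lemma LT_pres f m (R : pred (btuple m)) : Lambda f -> T1 f -> R [ffun _ => true] ->
  (forall x y, R x -> R y -> R [ffun i => x i && y i]) -> pres f R.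
Proof.
move=> /Lambda_Yc [b [s Hf]] [_ H1] Rone Rmeet F HF Hd.
have Hb : b by move: H1; rewrite Hf ffunE => -[] /andP[].
have -> : [ffun r => odflt false (pfn f (F r))] = [ffun r => \big[andb/true]_(i <- s) F r i].
  by apply/ffunP => r; rewrite !ffunE Hf ffunE Hb.
clear Hf; elim: s => [|i s IH].
- have -> : [ffun r => \big[andb/true]_(i <- [::]) F r i] = [ffun _ => true].
    by apply/ffunP=> r; rewrite !ffunE big_nil.
  exact: Rone.
- have -> : [ffun r => \big[andb/true]_(j <- i :: s) F r j] =
    [ffun r => [ffun r => F r i] r && [ffun r => \big[andb/true]_(j <- s) F r j] r].
    by apply/ffunP => r; rewrite !ffunE big_cons.
  exact: Rmeet (HF i) IH.
Qed.

Lemma LT_total f : Lambda f -> T1 f -> Defs.total f.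
Proof. by move=> _ []. Qed.

Lemma Lambda_conj n (s : seq 'I_n.+1) : Lambda (PFun (conjf true s)).
Proof.
move=> Y [HY1 HY2] Hg.
elim: s => [|i s IH].
- pose gs := (fun _ : 'I_(arity (f_const true)) => pfn (proj (ord0 : 'I_n.+1))).
  have E : conjf true [::] = Defs.comp gs.
    apply/ffunP => x; rewrite /Defs.comp !ffunE.
    have -> : [forall i, gs i x != None] by apply/forallP => i; rewrite /gs ffunE.
    by rewrite ffunE big_nil.
  rewrite E; apply: HY2; first by apply: Hg; right; right.
  by move=> j; exact: HY1.
- pose gs := (fun j : 'I_(arity f_and) => if j == ord0 then pfn (proj i) else conjf true s).
  have E : conjf true (i :: s) = Defs.comp gs.
    apply/ffunP => x; rewrite /Defs.comp !ffunE.
    have -> : [forall j, gs j x != None].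
      by apply/forallP => j; rewrite /gs; case: ifP => _; rewrite ffunE.
    by rewrite /= big_cons.
  rewrite E; apply: HY2; first by apply: Hg; left.
  by move=> j; rewrite /gs; case: ifP => _; [exact: HY1 | exact: IH].
Qed.

Lemma char n (ff : {ffun btuple n.+1 -> option bool}) :
  Defs.total (PFun ff) -> pres (PFun ff) Rle -> pres (PFun ff) R3r -> pres (PFun ff) R1r ->
  Lambda (PFun ff) /\ T1 (PFun ff).
Proof.
move=> Ht Hle H3 H1.
pose tf x := odflt false (ff x).
have Ef : forall x, ff x = Some (tf x).
  by move=> x; rewrite /tf; case E: (ff x) => [b|] //; move: (Ht x); rewrite /= E.
have t1 : tf [ffun _ => true].
  have hc : forall c, R1r [ffun i : 'I_1 => ([ffun _ => true] : btuple n.+1) c].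
    by move=> c; rewrite /R1r !ffunE.
  by have := H1 (fun _ => [ffun _ => true]) hc (fun i => Ht _); rewrite /R1r ffunE.
have mono : forall x y : btuple n.+1, (forall i, x i ==> y i) -> tf x ==> tf y.
  move=> x y hxy; pose F (r : 'I_2) := if r == ord0 then x else y.
  have hc : forall c, Rle [ffun r => F r c] by move=> c; rewrite /Rle !ffunE /F /=; exact: hxy.
  by have := Hle F hc (fun i => Ht _); rewrite /Rle !ffunE /F /=.
have meet : forall x y : btuple n.+1, tf x -> tf y -> tf [ffun i => x i && y i].
  move=> x y tx ty.
  pose F (r : 'I_3) := if r == ord0 then x else if r == lift ord0 ord0 then y
                       else [ffun i => x i && y i].
  have hc : forall c, R3r [ffun r => F r c] by move=> c; rewrite /R3r !ffunE /F /= implybb.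
  have := H3 F hc (fun i => Ht _); rewrite /R3r !ffunE /F /= => /implyP; apply; apply/andP; split; [exact: tx | exact: ty].
pose z := \big[(fun a b : btuple n.+1 => [ffun i => a i && b i])/[ffun _ => true]]_(y | tf y) y.
have tz : tf z by rewrite /z; apply: (big_ind (fun v => tf v)) => //; move=> a b; exact: meet.
have zi : forall i, z i = [forall y, tf y ==> y i].
  move=> i; rewrite /z (big_morph (fun v : btuple n.+1 => v i) (id1 := true) (op1 := andb)).
  - by rewrite big_andE.
  - by move=> a b; rewrite ffunE.
  - by rewrite ffunE.
have tfc : forall x, tf x = [forall i, z i ==> x i].
  move=> x; apply/idP/forallP => [tx i|H].
    by rewrite zi; apply/implyP => /forallP /(_ x); rewrite tx.
  by have := mono z x; rewrite tz; apply => i; exact: H i.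
have Eff : ff = conjf true [seq i <- index_enum 'I_n.+1 | z i].
  by apply/ffunP => x; rewrite Ef ffunE tfc big_filter big_andE.
split; first by rewrite Eff; exact: Lambda_conj.
by split; [exact: Ht | rewrite /= Ef t1].
Qed.

Lemma Rle_meet x y : Rle x -> Rle y -> Rle [ffun i => x i && y i].
Proof. by rewrite /Rle !ffunE; case: (x ord0); case: (x ord_max); case: (y ord0); case: (y ord_max). Qed.
Lemma R3_meet x y : R3r x -> R3r y -> R3r [ffun i => x i && y i].
Proof.
by rewrite /R3r !ffunE; case: (x ord0); case: (x ord_max); case: (y ord0); case: (y ord_max);
  case: (x (lift ord0 ord0)); case: (y (lift ord0 ord0)).
Qed.
Lemma R1_meet x y : R1r x -> R1r y -> R1r [ffun i => x i && y i].
Proof. by rewrite /R1r !ffunE => -> ->. Qed.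

Lemma rho_meet n (x y : btuple n.+3) : rho x -> rho y -> rho [ffun i => x i && y i].
Proof.
move=> /rhoE[a1 a2 a3 a4] /rhoE[b1 b2 b3 b4]; apply: rhoI.
- move=> i hi; rewrite !ffunE => /andP[xi yi]; by rewrite (a1 i hi xi) (b1 i hi yi).
- move=> i j hi hj ij; rewrite !ffunE => /andP[xi yi] /andP[xj yj].
  by rewrite (a2 i j hi hj ij xi xj) (b2 i j hi hj ij yi yj).
- move=> H; rewrite ffunE; apply/andP; split; [apply: a3 | apply: b3] => i hi;
    by have := H i hi; rewrite ffunE => /andP[].
- by rewrite !ffunE => /andP[xw yw]; rewrite a4 ?b4.
Qed.

Lemma X_total S f : (XS S f /\ Defs.total f) <-> (Lambda f /\ T1 f).
Proof.
split.
- case: f => n ff [[h1 h2 h3 _] ht]; exact: char.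
- move=> [hL hT]; split; last exact: LT_total hT.
  split.
  + apply: (LT_pres hL hT); [by rewrite /Rle /= !ffunE | exact: Rle_meet].
  + apply: (LT_pres hL hT); [by rewrite /R3r /= !ffunE | exact: R3_meet].
  + apply: (LT_pres hL hT); [by rewrite /R1r /= !ffunE | exact: R1_meet].
  + move=> k _; apply: (LT_pres hL hT); last exact: rho_meet.
    exact: (@Cone_rho k.+3).
Qed.

Lemma X_Istr S : Istr (fun f => Lambda f /\ T1 f) (XS S).
Proof. split; [exact: X_strong | exact: X_total]. Qed.

Fixpoint Dn (A B : Type) (f : A -> B) (g : B -> A) (n : nat) (b : B) : Prop :=
  match n with
  | 0 => ~ (exists a, f a = b)
  | n'.+1 => exists b', Dn f g n' b' /\ b = f (g b')
  end.

Lemma SB (A B : Type) (a0 : A) (f : A -> B) (g : B -> A) :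
  injective f -> injective g -> exists h : A -> B, bijective h.
Proof.
move=> fi gi.
pose finv b := epsilon (inhabits a0) (fun a => f a = b).
have finvK : forall b, (exists a, f a = b) -> f (finv b) = b.
  by move=> b hb; exact: (epsilon_spec (inhabits a0) (fun a => f a = b) hb).
pose D b := exists n, Dn f g n b.
pose k b := if excluded_middle_informative (D b) then g b else finv b.
have kinj : injective k.
  have mixed : forall b1 b2, D b1 -> ~ D b2 -> g b1 <> finv b2.
    move=> b1 b2 [n hn] nD e.
    have hb2 : exists a, f a = b2.
      by apply: NNPP => hn0; apply: nD; exists 0.
    apply: nD; exists n.+1; exists b1; split => //.
    by rewrite e finvK.
  move=> b1 b2; rewrite /k.
  destruct (excluded_middle_informative (D b1)) as [d1|d1];
    destruct (excluded_middle_informative (D b2)) as [d2|d2].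
  - by move=> /=; exact: gi.
  - by move=> /= e; exfalso; exact (mixed _ _ d1 d2 e).
  - by move=> /= e; exfalso; exact (mixed _ _ d2 d1 (esym e)).
  - move=> /= e.
    have h1 : exists a, f a = b1 by apply: NNPP => hn0; exact (d1 (ex_intro _ 0 hn0)).
    have h2 : exists a, f a = b2 by apply: NNPP => hn0; exact (d2 (ex_intro _ 0 hn0)).
    by rewrite -(finvK _ h1) -(finvK _ h2) e.
have ksurj : forall a, exists b, k b = a.
  move=> a; case: (excluded_middle_informative (D (f a))) => hD.
  - case: hD => [[|n] hn].
      by exfalso; apply: hn; exists a.
    case: hn => b' [hb' e].
    exists b'; rewrite /k; destruct (excluded_middle_informative (D b')) as [d|nD] => /=.
      by rewrite (fi _ _ e).
    by exfalso; exact (nD (ex_intro _ n hb')).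
  - exists (f a); rewrite /k; destruct (excluded_middle_informative (D (f a))) as [d|nd] => /=.
      by exfalso; exact (hD d).
    by apply: fi; rewrite finvK //; exists a.
pose hinv a := epsilon (inhabits (f a0)) (fun b => k b = a).
have hinvK : forall a, k (hinv a) = a.
  by move=> a; exact: (epsilon_spec (inhabits (f a0)) (fun b => k b = a) (ksurj a)).
exists hinv; exists k; first exact: hinvK.
by move=> b; apply: kinj; rewrite hinvK.
Qed.

Definition enc (f : pfun) : nat :=
  pickle (Tagged (fun n => {ffun btuple n.+1 -> option bool}) (pfn f)).

Lemma enc_inj : injective enc.
Proof.
move=> [n ff] [n' ff'] /(pcan_inj pickleK) e.
have en : n = n' by move/(congr1 tag): e.
subst n'; congr PFun.
exact: (inj_pair2_eq_dec _ PeanoNat.Nat.eq_dec _ _ _ _ e).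
Qed.

Definition CC := fun f => Lambda f /\ T1 f.

Theorem mainTheorem6 :
  exists g : (nat -> bool) ->
             {X : pfun -> Prop | Istr (fun f => Lambda f /\ T1 f) X},
    bijective g.
Proof.
pose F (S : nat -> bool) : {X : pfun -> Prop | Istr (fun f => Lambda f /\ T1 f) X} :=
  exist _ (XS S) (X_Istr S).
pose G (Y : {X : pfun -> Prop | Istr (fun f => Lambda f /\ T1 f) X}) : nat -> bool :=
  fun n => if excluded_middle_informative (exists f, enc f = n /\ proj1_sig Y f) then true else false.
apply: (SB (fun _ => false) (f := F) (g := G)).
- move=> S T e; apply: X_inj.
  exact: (congr1 (@proj1_sig _ _) e).
- move=> [Y hY] [Z hZ] e.
  have EYZ : Y = Z.
    apply: functional_extensionality => f; apply: propositional_extensionality.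
    have := congr1 (fun t => t (enc f)) e; rewrite /G /=.
    destruct (excluded_middle_informative (exists f0, enc f0 = enc f /\ Y f0)) as [[f1 [e1 y1]]|ny];
      destruct (excluded_middle_informative (exists f0, enc f0 = enc f /\ Z f0)) as [[f2 [e2 z2]]|nz] => // _.
    + by move: y1 z2; rewrite (enc_inj e1) (enc_inj e2).
    + by split => [yf|zf]; exfalso; [apply: ny | apply: nz]; exists f.
  subst Z; congr exist; exact: proof_irrelevance.
Qed.
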